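(* Let $\widehat{\mathcal T}_\bullet$ be an arbitrary hierarchical mesh on $\widehat\Omega$, and let $E=[0,1]^{I-1}\times\{e\}\times[0,1]^{d-I}$ with $I\in\{1,\dots,d\}$, $e\in\{0,1\}$. Let $\widehat{\mathcal K}^0|_E:=(\widehat{\mathcal K}^0_1,\dots,\widehat{\mathcal K}^0_{I-1},\widehat{\mathcal K}^0_{I+1},\dots,\widehat{\mathcal K}^0_d)$ and $\widehat\Omega^k_\bullet|_E:=\{(s_1,\dots,s_{I-1},s_{I+1},\dots,s_d):(s_1,\dots,s_d)\in\widehat\Omega^k_\bullet\cap E\}$, and let $\widehat{\mathcal H}_\bullet|_E$ be the $(d-1)$-dimensional hierarchical basis for these data. Then, identifying functions on $[0,1]^{d-1}$ with functions on $E$, $\widehat{\mathcal H}_\bullet|_E=\{\widehat\beta|_E:\widehat\beta\in\widehat{\mathcal H}_\bullet,\ \widehat\beta|_E\neq0\}$. Moreover, if $\widehat\beta_1,\widehat\beta_2\in\widehat{\mathcal H}_\bullet$, $\widehat\beta_1\ne\widehat\beta_2$ and $\widehat\beta_1|_E\ne0$, then $\widehat\beta_1|_E\ne\widehat\beta_2|_E$.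
   Context: Parameter domain $\widehat\Omega=(0,1)^d$, $d\ge2$ (for $d-1=1$ the same definitions apply in one dimension). Fix degrees $p_1,\dots,p_d\ge1$. For each $i$ let $\widehat{\mathcal K}^0_i=(t^0_{i,j})_{j=0}^{N^0_i+p_i}$ be a nondecreasing vector in $[0,1]$ whose first $p_i+1$ entries are $0$, last $p_i+1$ entries are $1$, and whose interior knots have multiplicity $\le p_i$. $\widehat{\mathcal K}^{k+1}_i$ arises from $\widehat{\mathcal K}^k_i$ by inserting the midpoint of every nondegenerate knot span once. $\widehat{\mathcal B}^k$ denotes the tensor-product B-splines of degree $(p_1,\dots,p_d)$ for $\widehat{\mathcal K}^k$, and $\widehat{\mathcal T}^k$ the closed cells of level $k$ (nondegenerate boxes $\prod_i[t^k_{i,j_i-1},t^k_{i,j_i}]$). A hierarchical mesh is given by closed sets $[0,1]^d=\widehat\Omega^0_\bullet\supseteq\widehat\Omega^1_\bullet\supseteq\cdots$, each $\widehat\Omega^k_\bullet$ ($k\ge1$) a union of cells of $\widehat{\mathcal T}^{k-1}$, with $\widehat\Omega^M_\bullet=\emptyset$ for some $M$; its hierarchical basis is $\widehat{\mathcal H}_\bullet=\bigcup_k\{\widehat\beta\in\widehat{\mathcal B}^k:{\rm supp}\,\widehat\beta\subseteq\widehat\Omega^k_\bullet,\ {\rm supp}\,\widehat\beta\not\subseteq\widehat\Omega^{k+1}_\bullet\}$. *)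

(* Defs.v *)
From Stdlib Require Import Reals List Arith.
Import ListNotations.
Open Scope R_scope.

Definition Rltb (a b : R) : bool := if Rlt_dec a b then true else false.
Definition Rleb (a b : R) : bool := if Rle_dec a b then true else false.
Definition Reqb (a b : R) : bool := if Req_EM_T a b then true else false.

(* a / b with the convention 0/0 := 0 (used in Cox-de Boor) *)
Definition frac (a b : R) : R := if Req_EM_T b 0 then 0 else a / b.

(* A knot vector is a list of reals, t_j = nth j t 0 (0-based). *)
Definition knot (t : list R) (j : nat) : R := nth j t 0.

Fixpoint nondecreasing (t : list R) : Prop :=
  match t with
  | a :: ((b :: _) as r) => a <= b /\ nondecreasing r
  | _ => True
  end.

Definition multiplicity (v : R) (t : list R) : nat :=
  length (filter (fun x => Reqb x v) t).

Definition valid_knots (p : nat) (t : list R) : Prop :=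
  (p + 1 <= length t)%nat /\
  nondecreasing t /\
  (forall j, (j < length t)%nat -> 0 <= knot t j <= 1) /\
  (forall j, (j <= p)%nat -> knot t j = 0 /\ knot t (length t - 1 - j) = 1) /\
  (forall j, (j < length t)%nat -> 0 < knot t j < 1 ->
       (multiplicity (knot t j) t <= p)%nat).

Fixpoint refine (t : list R) : list R :=
  match t with
  | a :: ((b :: _) as r) =>
      if Rlt_dec a b then a :: (a + b) / 2 :: refine r else a :: refine r
  | _ => t
  end.

Definition knots (K0 : nat -> list R) (k i : nat) : list R :=
  Nat.iter k refine (K0 i).

Definition nbs (t : list R) (p : nat) : nat := (length t - p - 1)%nat.

(* Degree 0: indicator of [t_j, t_{j+1}), with the last nondegenerate span
   closed at the right endpoint 1 (so that B-splines are defined on the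
   closed interval [0,1]). *)
Definition bsp0 (t : list R) (j : nat) (x : R) : R :=
  if orb (andb (Rleb (knot t j) x) (Rltb x (knot t (S j))))
         (andb (andb (Rltb (knot t j) (knot t (S j))) (Reqb x 1))
               (Reqb (knot t (S j)) 1))
  then 1 else 0.

Fixpoint bsp (t : list R) (p : nat) (j : nat) (x : R) : R :=
  match p with
  | O => bsp0 t j x
  | S q =>
      frac (x - knot t j) (knot t (j + p) - knot t j) * bsp t q j x
      + frac (knot t (j + p + 1) - x) (knot t (j + p + 1) - knot t (S j))
          * bsp t q (S j) x
  end.

(* A point of R^d is x : nat -> R, only coordinates 0..d-1 being relevant. *)
Definition pt := nat -> R.

Definition cube (d : nat) (x : pt) : Prop := forall i, (i < d)%nat -> 0 <= x i <= 1.

Fixpoint prodR (n : nat) (f : nat -> R) : R :=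
  match n with O => 1 | S m => prodR m f * f m end.

Definition bspline (d : nat) (p : nat -> nat) (K0 : nat -> list R) (k : nat)
  (j : nat -> nat) (x : pt) : R :=
  prodR d (fun i => bsp (knots K0 k i) (p i) (j i) (x i)).

Definition valid_index (d : nat) (p : nat -> nat) (K0 : nat -> list R) (k : nat)
  (j : nat -> nat) : Prop :=
  forall i, (i < d)%nat -> (j i < nbs (knots K0 k i) (p i))%nat.

Definition closure (d : nat) (S : pt -> Prop) (x : pt) : Prop :=
  forall eps, eps > 0 -> exists y, S y /\ forall i, (i < d)%nat -> Rabs (x i - y i) < eps.

Definition supp_sub (d : nat) (f : pt -> R) (S : pt -> Prop) : Prop :=
  forall x, closure d (fun y => f y <> 0) x -> S x.

Definition is_cell (d : nat) (K0 : nat -> list R) (k : nat) (j : nat -> nat) : Prop :=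
  forall i, (i < d)%nat ->
    (1 <= j i < length (knots K0 k i))%nat /\
    knot (knots K0 k i) (j i - 1) < knot (knots K0 k i) (j i).

Definition in_cell (d : nat) (K0 : nat -> list R) (k : nat) (j : nat -> nat) (x : pt) : Prop :=
  forall i, (i < d)%nat ->
    knot (knots K0 k i) (j i - 1) <= x i <= knot (knots K0 k i) (j i).

Definition hier_mesh (d : nat) (K0 : nat -> list R) (Om : nat -> pt -> Prop) : Prop :=
  (forall x, Om O x <-> cube d x) /\
  (forall k x, Om (S k) x -> Om k x) /\
  (forall k, exists C : (nat -> nat) -> Prop,
      forall x, Om (S k) x <-> exists j, C j /\ is_cell d K0 k j /\ in_cell d K0 k j x) /\
  (exists M, forall x, ~ Om M x).

Definition eq_on (d : nat) (f g : pt -> R) : Prop := forall x, cube d x -> f x = g x.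
Definition nonzero_on (d : nat) (f : pt -> R) : Prop := exists x, cube d x /\ f x <> 0.

Definition inH (d : nat) (p : nat -> nat) (K0 : nat -> list R) (Om : nat -> pt -> Prop)
  (beta : pt -> R) : Prop :=
  exists k j, valid_index d p K0 k j /\
    supp_sub d (bspline d p K0 k j) (Om k) /\
    ~ supp_sub d (bspline d p K0 k j) (Om (S k)) /\
    eq_on d beta (bspline d p K0 k j).

(* 0-based direction I; drop direction I from a family *)
Definition skip {A : Type} (I : nat) (f : nat -> A) : nat -> A :=
  fun i => if (i <? I)%nat then f i else f (S i).

Definition ins (I : nat) (e : R) (s : pt) : pt :=
  fun i => if (i <? I)%nat then s i else if (i =? I)%nat then e else s (i - 1)%nat.

Definition restr (I : nat) (e : R) (f : pt -> R) : pt -> R := fun s => f (ins I e s).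

Definition restrOm (I : nat) (e : R) (Om : nat -> pt -> Prop) : nat -> pt -> Prop :=
  fun k s => Om k (ins I e s).

(* Main.v *)
Require Import Defs.
From Stdlib Require Import Reals List Arith Lia Lra Psatz Classical FunctionalExtensionality.
Import ListNotations.
Open Scope R_scope.

Definition KV (t : list R) : Prop :=
  (forall a b, (a <= b)%nat -> (b < length t)%nat -> knot t a <= knot t b) /\
  (forall a, 0 <= knot t a <= 1).

Lemma bsp0_spec t j x :
  ((knot t j <= x < knot t (S j)) \/ (knot t j < knot t (S j) /\ x = 1 /\ knot t (S j) = 1))
   /\ bsp0 t j x = 1
  \/ ~((knot t j <= x < knot t (S j)) \/ (knot t j < knot t (S j) /\ x = 1 /\ knot t (S j) = 1))
   /\ bsp0 t j x = 0.
Proof.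
  unfold bsp0, Rleb, Rltb, Reqb.
  destruct (Rle_dec (knot t j) x); destruct (Rlt_dec x (knot t (S j)));
  destruct (Rlt_dec (knot t j) (knot t (S j))); destruct (Req_EM_T x 1);
  destruct (Req_EM_T (knot t (S j)) 1); simpl;
  first [ left; split; [ tauto | reflexivity ] | right; split; [ intros [H|H]; lra | reflexivity ] ].
Qed.

Lemma frac_eq a b : b <> 0 -> frac a b = a / b.
Proof. intros; unfold frac; destruct (Req_EM_T b 0); [contradiction|reflexivity]. Qed.

Lemma frac_0 b : frac 0 b = 0.
Proof. unfold frac; destruct (Req_EM_T b 0); [reflexivity|]; unfold Rdiv; ring. Qed.

Lemma bsp_S t q j x : bsp t (S q) j x =
  frac (x - knot t j) (knot t (j + S q) - knot t j) * bsp t q j x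
  + frac (knot t (j + S q + 1) - x) (knot t (j + S q + 1) - knot t (S j)) * bsp t q (S j) x.
Proof. reflexivity. Qed.

Section Uni.
Variable t : list R.
Hypothesis Ht : KV t.

Lemma kmono a b : (a <= b)%nat -> (b < length t)%nat -> knot t a <= knot t b.
Proof. apply (proj1 Ht). Qed.
Lemma krange a : 0 <= knot t a <= 1.
Proof. apply (proj2 Ht). Qed.

Lemma bsp_supp q : forall j x, (j + q + 1 < length t)%nat -> bsp t q j x <> 0 ->
  knot t j <= x <= knot t (j + q + 1) /\ knot t j < knot t (j + q + 1).
Proof.
  induction q; intros j x Hl Hn.
  - replace (j + 0 + 1)%nat with (S j) by lia.
    destruct (bsp0_spec t j x) as [[H _]|[_ H]]; [|simpl in Hn; congruence].
    destruct H as [H|H]; lra.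
  - rewrite bsp_S in Hn.
    destruct (Req_dec (bsp t q j x) 0) as [H1|H1].
    + rewrite H1 in Hn. destruct (Req_dec (bsp t q (S j) x) 0) as [H2|H2].
      * rewrite H2 in Hn. lra.
      * destruct (IHq (S j) x ltac:(lia) H2).
        replace (S j + q + 1)%nat with (j + S q + 1)%nat in * by lia.
        pose proof (kmono j (S j) ltac:(lia) ltac:(lia)). lra.
    + destruct (IHq j x ltac:(lia) H1).
      pose proof (kmono (j+q+1) (j + S q + 1) ltac:(lia) ltac:(lia)). lra.
Qed.

Lemma bsp_one q : forall j x, (j + q + 1 < length t)%nat ->
  knot t j = x -> knot t (j + q) = x -> x < knot t (j + q + 1) -> bsp t q j x = 1.
Proof.
  induction q; intros j x Hl H1 H2 H3.
  - replace (j + 0 + 1)%nat with (S j) in * by lia.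
    destruct (bsp0_spec t j x) as [[_ H]|[H _]]; [simpl; exact H|].
    exfalso; apply H; left; lra.
  - rewrite bsp_S. rewrite H1. replace (x - x) with 0 by ring. rewrite frac_0.
    pose proof (kmono j (S j) ltac:(lia) ltac:(lia)) as M1.
    pose proof (kmono (S j) (j + S q) ltac:(lia) ltac:(lia)) as M2.
    assert (HS: knot t (S j) = x) by lra.
    rewrite HS. rewrite frac_eq by lra.
    rewrite (IHq (S j) x) by (try lia; try (replace (S j + q)%nat with (j + S q)%nat by lia; lra);
       replace (S j + q + 1)%nat with (j + S q + 1)%nat by lia; lra).
    field. lra.
Qed.

Lemma bsp_at0 q : forall j, (j + q + 1 < length t)%nat -> bsp t q j 0 <> 0 ->
  knot t (j + q) = 0 /\ 0 < knot t (j + q + 1) /\ bsp t q j 0 = 1.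
Proof.
  intros j Hl Hn.
  destruct (bsp_supp q j 0 Hl Hn) as [[A B] C].
  pose proof (krange j).
  assert (knot t j = 0) by lra.
  revert j Hl Hn A B C H H0. induction q; intros j Hl Hn A B C H H0.
  - replace (j + 0)%nat with j by lia. replace (j + 0 + 1)%nat with (S j) in * by lia.
    destruct (bsp0_spec t j 0) as [[[Hc|Hc] Hv]|[_ Hv]]; [|lra|simpl in Hn; congruence].
    replace (j+1)%nat with (S j) by lia. split; [lra|split; [lra|exact Hv]].
  - rewrite bsp_S in Hn. rewrite H0 in Hn. replace (0 - 0) with 0 in Hn by ring.
    rewrite frac_0 in Hn. rewrite Rmult_0_l, Rplus_0_l in Hn.
    assert (Hn2 : bsp t q (S j) 0 <> 0) by (intro Hz; apply Hn; rewrite Hz; ring).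
    destruct (bsp_supp q (S j) 0 ltac:(lia) Hn2) as [[A2 B2] C2].
    pose proof (krange (S j)).
    assert (knot t (S j) = 0) by lra.
    destruct (IHq (S j) ltac:(lia) Hn2 A2 B2 C2 H1 H2) as [E1 [E2 E3]].
    replace (S j + q)%nat with (j + S q)%nat in * by lia.
    replace (S j + q + 1)%nat with (j + S q + 1)%nat in * by lia.
    split; [exact E1|split; [exact E2|]].
    apply bsp_one; try lia; lra.
Qed.

Lemma bsp_at1 q : forall j, (j + q + 1 < length t)%nat ->
  (knot t j < 1 /\ knot t (S j) = 1 -> bsp t q j 1 = 1) /\
  (~ (knot t j < 1 /\ knot t (S j) = 1) -> bsp t q j 1 = 0).
Proof.
  induction q; intros j Hl.
  - pose proof (krange (S j)) as R1; pose proof (krange j) as R2.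
    destruct (bsp0_spec t j 1) as [[Hc Hv]|[Hc Hv]]; simpl; rewrite Hv; split; intros H.
    + reflexivity.
    + exfalso. apply H. destruct Hc as [Hc|Hc]; lra.
    + exfalso. apply Hc. right. lra.
    + reflexivity.
  - rewrite bsp_S. destruct (IHq j ltac:(lia)) as [A1 A2]. destruct (IHq (S j) ltac:(lia)) as [B1 B2].
    assert (Hb: frac (knot t (j + S q + 1) - 1) (knot t (j + S q + 1) - knot t (S j)) * bsp t q (S j) 1 = 0).
    { destruct (classic (knot t (S j) < 1 /\ knot t (S (S j)) = 1)) as [C|C].
      - destruct C as [X Y]. pose proof (kmono (S (S j)) (j + S q + 1) ltac:(lia) ltac:(lia)).
        pose proof (krange (j + S q + 1)).
        replace (knot t (j + S q + 1) - 1) with 0 by lra. rewrite frac_0; ring.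
      - rewrite (B2 C); ring. }
    rewrite Hb. split; intros H.
    + rewrite A1 by exact H.
      pose proof (kmono (S j) (j + S q) ltac:(lia) ltac:(lia)). pose proof (krange (j + S q)).
      assert (knot t (j + S q) = 1) by lra.
      rewrite H2. rewrite frac_eq by lra. field. lra.
    + rewrite A2 by exact H. ring.
Qed.

End Uni.

Lemma div_ge N D : 0 < D <= 1 -> 0 <= N -> N <= N / D.
Proof.
  intros [HD HD1] HN. unfold Rdiv.
  assert (1 <= / D). { rewrite <- Rinv_1. apply Rinv_le_contravar; lra. }
  nra.
Qed.
Lemma div_le N D E : 0 < E <= D -> 0 <= N -> N / D <= N / E.
Proof.
  intros [HE HED] HN. unfold Rdiv. apply Rmult_le_compat_l; [lra|].
  apply Rinv_le_contravar; lra.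
Qed.
Lemma div_half N D : 0 < D -> D / 2 <= N -> 1/2 <= N / D.
Proof.
  intros HD HN. replace (1/2) with ((D/2) / D) by (field; lra).
  unfold Rdiv. apply Rmult_le_compat_r; [left; apply Rinv_0_lt_compat; lra|lra].
Qed.
Lemma div_le1 N D : 0 < D -> N <= D -> N / D <= 1.
Proof.
  intros HD HN. replace 1 with (D / D) by (field; lra).
  unfold Rdiv. apply Rmult_le_compat_r; [left; apply Rinv_0_lt_compat; lra|lra].
Qed.

Section Uni2.
Variable t : list R.
Hypothesis Ht : KV t.

Lemma bsp_bound q : forall j m a c, (j + q + 1 < length t)%nat -> (1 <= m <= q+1)%nat ->
  (forall i, (i < m)%nat -> knot t (j+i) = a) -> knot t (j+m) = c -> a < c ->
  exists L U, 0 < L /\ 0 < U /\ forall x, a < x <= (a+c)/2 ->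
    L * (x-a)^(q+1-m) <= bsp t q j x <= U * (x-a)^(q+1-m).
Proof.
  induction q; intros j m a c Hl Hm Ha Hc Hac.
  - assert (m = 1%nat) by lia. subst m.
    exists 1, 1. split; [lra|split; [lra|]]. intros x Hx.
    replace (0+1-1)%nat with 0%nat by lia. simpl pow.
    assert (E1: knot t j = a) by (replace j with (j+0)%nat by lia; apply Ha; lia).
    replace (j+1)%nat with (S j) in Hc by lia.
    destruct (bsp0_spec t j x) as [[_ Hv]|[Hv _]]; [simpl; rewrite Hv; lra|].
    exfalso; apply Hv; left; lra.
  - assert (Ea : knot t j = a) by (replace j with (j+0)%nat by lia; apply Ha; lia).
    pose proof (krange t Ht j) as Rj.
    destruct (Nat.eq_dec m (S q + 1)) as [Em|Em].
    +
      assert (Eq1 : knot t (j + S q) = a) by (apply Ha; lia).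
      destruct (IHq (S j) (q+1)%nat a c ltac:(lia) ltac:(lia)) as [L [U [HL [HU HB]]]].
      { intros i Hi. replace (S j + i)%nat with (j + S i)%nat by lia. apply Ha. lia. }
      { replace (S j + (q+1))%nat with (j+m)%nat by lia. exact Hc. }
      { exact Hac. }
      exists (L/2), U. split; [lra|split; [lra|]]. intros x Hx.
      replace (S q + 1 - m)%nat with 0%nat by lia.
      replace (q + 1 - (q + 1))%nat with 0%nat in HB by lia.
      specialize (HB x Hx). simpl pow in *.
      rewrite bsp_S.
      assert (Z1 : bsp t q j x = 0).
      { destruct (Req_dec (bsp t q j x) 0) as [Z|Z]; [exact Z|].
        destruct (bsp_supp t Ht q j x ltac:(lia) Z) as [[_ X] _].
        replace (j + q + 1)%nat with (j + S q)%nat in X by lia. lra. }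
      rewrite Z1, Rmult_0_r, Rplus_0_l.
      assert (E2 : knot t (j + S q + 1) = c) by (rewrite <- Hc; f_equal; lia).
      assert (E3 : knot t (S j) = a) by (replace (S j) with (j+1)%nat by lia; apply Ha; lia).
      rewrite E2, E3. rewrite frac_eq by lra.
      assert (1/2 <= (c - x) / (c - a)) by (apply div_half; lra).
      assert ((c - x) / (c - a) <= 1) by (apply div_le1; lra).
      split; nra.
    + destruct (IHq j m a c ltac:(lia) ltac:(lia) Ha Hc Hac) as [L1 [U1 [HL1 [HU1 HB1]]]].
      assert (T1ge : c <= knot t (j + S q)) by (rewrite <- Hc; apply (kmono t Ht); lia).
      pose proof (krange t Ht (j + S q)) as RT1.
      replace (S q + 1 - m)%nat with (S (q + 1 - m)) by lia.
      set (n := (q + 1 - m)%nat) in *.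
      destruct (Nat.eq_dec m 1) as [E1|E1].
      * exists L1, (U1 / (c - a)). split; [lra|split; [apply Rdiv_lt_0_compat; lra|]].
        intros x Hx. specialize (HB1 x Hx).
        assert (HP : 0 < (x - a) ^ n) by (apply pow_lt; lra).
        rewrite bsp_S.
        assert (Z2 : bsp t q (S j) x = 0).
        { destruct (Req_dec (bsp t q (S j) x) 0) as [Z|Z]; [exact Z|].
          destruct (bsp_supp t Ht q (S j) x ltac:(lia) Z) as [[X _] _].
          replace (S j) with (j + m)%nat in X by lia. lra. }
        rewrite Z2, Rmult_0_r, Rplus_0_r. rewrite Ea.
        rewrite frac_eq by lra.
        assert (A1 : x - a <= (x - a) / (knot t (j + S q) - a)) by (apply div_ge; lra).
        assert (A2 : (x - a) / (knot t (j + S q) - a) <= (x - a) / (c - a)) by (apply div_le; lra).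
        simpl pow. split.
        -- replace (L1 * ((x - a) * (x - a) ^ n)) with ((x - a) * (L1 * (x-a)^n)) by ring.
           apply Rmult_le_compat; nra.
        -- replace (U1 / (c - a) * ((x - a) * (x - a) ^ n)) with (((x - a) / (c - a)) * (U1 * (x-a)^n)) by (field; lra).
           apply Rmult_le_compat; try nra.
      * destruct (IHq (S j) (m - 1)%nat a c ltac:(lia) ltac:(lia)) as [L2 [U2 [HL2 [HU2 HB2]]]].
        { intros i Hi. replace (S j + i)%nat with (j + S i)%nat by lia. apply Ha. lia. }
        { replace (S j + (m - 1))%nat with (j+m)%nat by lia. exact Hc. }
        { exact Hac. }
        replace (q + 1 - (m - 1))%nat with (S n) in HB2 by (unfold n; lia).
        exists (L1 + L2 / 2), (U1 / (c - a) + U2).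
        split; [lra|split; [pose proof (Rdiv_lt_0_compat U1 (c - a) HU1 ltac:(lra)); lra|]].
        intros x Hx. specialize (HB1 x Hx). specialize (HB2 x Hx).
        assert (HP : 0 < (x - a) ^ n) by (apply pow_lt; lra).
        assert (T2ge : c <= knot t (j + S q + 1)) by (rewrite <- Hc; apply (kmono t Ht); lia).
        pose proof (krange t Ht (j + S q + 1)) as RT2.
        assert (E3 : knot t (S j) = a) by (replace (S j) with (j+1)%nat by lia; apply Ha; lia).
        rewrite bsp_S. rewrite Ea, E3.
        rewrite frac_eq by lra. rewrite frac_eq by lra.
        assert (A1 : x - a <= (x - a) / (knot t (j + S q) - a)) by (apply div_ge; lra).
        assert (A2 : (x - a) / (knot t (j + S q) - a) <= (x - a) / (c - a)) by (apply div_le; lra).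
        assert (B1 : 1/2 <= (knot t (j + S q + 1) - x) / (knot t (j + S q + 1) - a)) by (apply div_half; lra).
        assert (B2 : (knot t (j + S q + 1) - x) / (knot t (j + S q + 1) - a) <= 1) by (apply div_le1; lra).
        set (al := (x - a) / (knot t (j + S q) - a)) in *.
        set (be := (knot t (j + S q + 1) - x) / (knot t (j + S q + 1) - a)) in *.
        set (P := (x - a) ^ n) in *.
        simpl pow in *. fold P in HB2 |- *.
        assert (Q1 : (x - a) * (L1 * P) <= al * bsp t q j x) by (apply Rmult_le_compat; nra).
        assert (Q2 : al * bsp t q j x <= ((x - a) / (c - a)) * (U1 * P)) by (apply Rmult_le_compat; nra).
        assert (XP : 0 < (x - a) * P) by (apply Rmult_lt_0_compat; lra).
        assert (XP2 : 0 < L2 * ((x - a) * P)) by (apply Rmult_lt_0_compat; lra).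
        assert (Q3 : 1/2 * (L2 * ((x - a) * P)) <= be * bsp t q (S j) x) by (apply Rmult_le_compat; lra).
        assert (Q4 : be * bsp t q (S j) x <= 1 * (U2 * ((x - a) * P))) by (apply Rmult_le_compat; lra).
        replace (((x - a) / (c - a)) * (U1 * P)) with (U1 / (c - a) * ((x - a) * P)) in Q2 by (field; lra).
        split; nra.
Qed.

End Uni2.

Lemma transition (P : nat -> Prop) : (forall n, P n \/ ~ P n) ->
  forall a b, (a < b)%nat -> P a -> ~ P b -> exists r, (a <= r < b)%nat /\ P r /\ ~ P (S r).
Proof.
  intros Hd a b. induction b; intros Hab Ha Hb; [lia|].
  destruct (Nat.eq_dec a b) as [E|E].
  - subst. exists b. repeat split; auto; lia.
  - destruct (Hd b) as [Pb|Pb].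
    + exists b. repeat split; auto; lia.
    + destruct (IHb ltac:(lia) Ha Pb) as [r [Hr [P1 P2]]]. exists r. repeat split; auto; lia.
Qed.

Lemma pow_le1 h k : 0 <= h <= 1 -> h ^ k <= 1.
Proof. intros H. induction k; simpl; [lra|]. pose proof (pow_le h k (proj1 H)). nra. Qed.

Lemma pow_small h n1 n2 : 0 <= h <= 1 -> (n1 < n2)%nat -> h ^ n2 <= h ^ n1 * h.
Proof.
  intros H Hn. replace n2 with (n1 + S (n2 - n1 - 1))%nat by lia.
  rewrite pow_add. simpl. pose proof (pow_le h n1 (proj1 H)).
  pose proof (pow_le1 h (n2 - n1 - 1) H). pose proof (pow_le h (n2 - n1 - 1) (proj1 H)).
  apply Rmult_le_compat_l; [lra|]. nra.
Qed.

Section Uni3.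
Variable t : list R.
Hypothesis Ht : KV t.

Lemma uni_lt q j1 j2 A1 A2 y1 : (j1 < j2)%nat -> (j2 + q + 1 < length t)%nat ->
  A1 <> 0 -> A2 <> 0 ->
  (forall y, 0 <= y <= 1 -> bsp t q j1 y * A1 = bsp t q j2 y * A2) ->
  bsp t q j1 y1 <> 0 -> False.
Proof.
  intros Hj Hl HA1 HA2 Heq Hy1.
  set (a := knot t j1).
  destruct (bsp_supp t Ht q j1 y1 ltac:(lia) Hy1) as [_ Hnd].
  destruct (transition (fun r => knot t (j1 + r) <= a)) with (a := 0%nat) (b := (q+1)%nat)
    as [r [Hr [P1 P2]]].
  { intros n. destruct (Rle_dec (knot t (j1 + n)) a); auto. }
  { lia. } { replace (j1+0)%nat with j1 by lia. unfold a; lra. }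
  { replace (j1 + (q+1))%nat with (j1 + q + 1)%nat by lia. fold a in Hnd. lra. }
  set (m1 := S r).
  assert (Run : forall i, (i < m1)%nat -> knot t (j1 + i) = a).
  { intros i Hi. pose proof (kmono t Ht j1 (j1+i) ltac:(lia) ltac:(lia)).
    pose proof (kmono t Ht (j1+i) (j1+r) ltac:(lia) ltac:(lia)). fold a in H. lra. }
  set (c := knot t (j1 + m1)).
  assert (Hac : a < c). { unfold c, m1. replace (j1 + S r)%nat with (j1 + S r)%nat by lia. lra. }
  destruct (bsp_bound t Ht q j1 m1 a c ltac:(lia) ltac:(unfold m1; lia) Run eq_refl Hac)
    as [L1 [U1 [HL1 [HU1 HB1]]]].
  pose proof (krange t Ht j1) as Ra. pose proof (krange t Ht (j1 + m1)) as Rc. fold a c in Ra, Rc.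
  destruct (le_lt_dec (j1 + m1) j2) as [Hc|Hc].
  - set (x := (a + c) / 2).
    assert (Hx : a < x <= (a + c) / 2) by (unfold x; lra).
    specialize (HB1 x Hx).
    assert (Z : bsp t q j2 x = 0).
    { destruct (Req_dec (bsp t q j2 x) 0) as [Z|Z]; [exact Z|].
      destruct (bsp_supp t Ht q j2 x ltac:(lia) Z) as [[X _] _].
      pose proof (kmono t Ht (j1 + m1) j2 Hc ltac:(lia)). fold c in H. unfold x in X. lra. }
    specialize (Heq x ltac:(unfold x; lra)). rewrite Z, Rmult_0_l in Heq.
    assert (0 < (x - a) ^ (q + 1 - m1)) by (apply pow_lt; lra).
    assert (0 < bsp t q j1 x) by nra.
    apply HA1. apply (Rmult_eq_reg_l (bsp t q j1 x)); lra.
  - set (m2 := (j1 + m1 - j2)%nat).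
    destruct (bsp_bound t Ht q j2 m2 a c ltac:(lia) ltac:(unfold m2, m1 in *; lia)) as [L2 [U2 [HL2 [HU2 HB2]]]].
    { intros i Hi. replace (j2 + i)%nat with (j1 + (j2 - j1 + i))%nat by lia. apply Run. unfold m2 in Hi; lia. }
    { unfold c, m2. f_equal. lia. }
    { exact Hac. }
    set (n1 := (q + 1 - m1)%nat) in *. set (n2 := (q + 1 - m2)%nat) in *.
    assert (Hn : (n1 < n2)%nat) by (unfold n1, n2, m2, m1 in *; lia).
    assert (PA1 : 0 < Rabs A1) by (apply Rabs_pos_lt; exact HA1).
    assert (PA2 : 0 < Rabs A2) by (apply Rabs_pos_lt; exact HA2).
    set (K := L1 * Rabs A1 / (2 * U2 * Rabs A2)).
    assert (HK : 0 < K) by (unfold K; apply Rdiv_lt_0_compat; [nra|]; nra).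
    set (h := Rmin ((c - a) / 2) K).
    assert (Hh1 : 0 < h) by (unfold h; apply Rmin_glb_lt; lra).
    assert (Hh2 : h <= (c - a) / 2) by (unfold h; apply Rmin_l).
    assert (Hh3 : h <= K) by (unfold h; apply Rmin_r).
    set (x := a + h).
    assert (Hx : a < x <= (a + c) / 2) by (unfold x; lra).
    specialize (HB1 x Hx). specialize (HB2 x Hx).
    replace (x - a) with h in HB1, HB2 by (unfold x; ring).
    specialize (Heq x ltac:(unfold x; lra)).
    assert (E : bsp t q j1 x * Rabs A1 = bsp t q j2 x * Rabs A2).
    { assert (P1' : 0 <= bsp t q j1 x). { pose proof (pow_lt h n1 Hh1). nra. }
      assert (P2' : 0 <= bsp t q j2 x). { pose proof (pow_lt h n2 Hh1). nra. }
      rewrite <- (Rabs_pos_eq (bsp t q j1 x)) by exact P1'.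
      rewrite <- (Rabs_pos_eq (bsp t q j2 x)) by exact P2'.
      rewrite <- !Rabs_mult. rewrite Heq. reflexivity. }
    assert (Hp := pow_small h n1 n2 ltac:(lra) Hn).
    assert (Hq : 0 < h ^ n1) by (apply pow_lt; lra).
    assert (I1 : L1 * h ^ n1 * Rabs A1 <= bsp t q j1 x * Rabs A1) by (apply Rmult_le_compat_r; lra).
    assert (I2 : bsp t q j2 x * Rabs A2 <= U2 * h ^ n2 * Rabs A2) by (apply Rmult_le_compat_r; lra).
    assert (I3 : U2 * h ^ n2 * Rabs A2 <= U2 * (h ^ n1 * h) * Rabs A2).
    { apply Rmult_le_compat_r; [lra|]. apply Rmult_le_compat_l; lra. }
    assert (I4 : L1 * Rabs A1 <= U2 * h * Rabs A2).
    { apply (Rmult_le_reg_l (h ^ n1)); [exact Hq|]. nra. }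
    assert (I5 : U2 * h * Rabs A2 <= U2 * K * Rabs A2).
    { apply Rmult_le_compat_r; [lra|]. apply Rmult_le_compat_l; lra. }
    assert (I6 : U2 * K * Rabs A2 = L1 * Rabs A1 / 2) by (unfold K; field; split; lra).
    nra.
Qed.

Lemma uni_neq q j1 j2 A1 A2 y1 : j1 <> j2 -> (j1 + q + 1 < length t)%nat -> (j2 + q + 1 < length t)%nat ->
  A1 <> 0 -> A2 <> 0 ->
  (forall y, 0 <= y <= 1 -> bsp t q j1 y * A1 = bsp t q j2 y * A2) ->
  0 <= y1 <= 1 -> bsp t q j1 y1 <> 0 -> False.
Proof.
  intros Hj Hl1 Hl2 HA1 HA2 Heq Hy Hy1.
  destruct (lt_dec j1 j2) as [H|H].
  - exact (uni_lt q j1 j2 A1 A2 y1 H Hl2 HA1 HA2 Heq Hy1).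
  - apply (uni_lt q j2 j1 A2 A1 y1 ltac:(lia) Hl1 HA2 HA1).
    + intros y Hy'. symmetry. apply Heq; exact Hy'.
    + intro Z. pose proof (Heq y1 Hy) as E. rewrite Z, Rmult_0_l in E.
      apply Hy1. apply (Rmult_eq_reg_r A1); [|exact HA1]. lra.
Qed.

End Uni3.

Lemma nondec_step t : nondecreasing t -> forall i, (S i < length t)%nat -> knot t i <= knot t (S i).
Proof.
  induction t as [|a r IH]; intros Hn i Hi; simpl in Hi; [lia|].
  destruct r as [|b r']; simpl in Hi; [lia|].
  destruct Hn as [Hab Hr]. destruct i.
  - unfold knot; simpl. exact Hab.
  - unfold knot in *. simpl. apply (IH Hr i). simpl. lia.
Qed.

Lemma nondec_mono t : nondecreasing t -> forall a b, (a <= b)%nat -> (b < length t)%nat -> knot t a <= knot t b.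
Proof.
  intros Hn a b Hab. induction Hab; intros Hb; [lra|].
  pose proof (nondec_step t Hn m Hb). specialize (IHHab ltac:(lia)). lra.
Qed.

Lemma refine_head a r : exists l, refine (a :: r) = a :: l.
Proof. destruct r as [|b r]; simpl; [eexists; reflexivity|]. destruct (Rlt_dec a b); eexists; reflexivity. Qed.

Lemma refine_nondec t : nondecreasing t -> nondecreasing (refine t).
Proof.
  induction t as [|a r IH]; intros Hn; [simpl; auto|].
  destruct r as [|b r']; [simpl; auto|].
  destruct Hn as [Hab Hr]. specialize (IH Hr).
  destruct (refine_head b r') as [l Hl].
  change (refine (a :: b :: r')) with (if Rlt_dec a b then a :: (a + b) / 2 :: refine (b :: r') else a :: refine (b :: r')).
  rewrite Hl in *. destruct (Rlt_dec a b); simpl; repeat split; try lra; exact IH.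
Qed.

Lemma refine_forall (P : R -> Prop) t : (forall a b, P a -> P b -> P ((a+b)/2)) ->
  Forall P t -> Forall P (refine t).
Proof.
  intros HP. induction t as [|a r IH]; intros Hf; [simpl; auto|].
  destruct r as [|b r']; [simpl; auto|].
  inversion Hf; subst. inversion H2; subst.
  change (refine (a :: b :: r')) with (if Rlt_dec a b then a :: (a + b) / 2 :: refine (b :: r') else a :: refine (b :: r')).
  specialize (IH H2).
  destruct (Rlt_dec a b); constructor; auto.
Qed.

Lemma refine_in x t : In x t -> In x (refine t).
Proof.
  induction t as [|a r IH]; intros H; [inversion H|].
  destruct r as [|b r']; [exact H|].
  change (refine (a :: b :: r')) with (if Rlt_dec a b then a :: (a + b) / 2 :: refine (b :: r') else a :: refine (b :: r')).
  destruct H as [H|H].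
  - subst. destruct (Rlt_dec x b); left; reflexivity.
  - destruct (Rlt_dec a b); right; [right|]; apply IH; exact H.
Qed.

Lemma refine_app l R0 : R0 <> [] -> exists l', refine (l ++ R0) = l' ++ refine R0.
Proof.
  intros HR. induction l as [|a l IH]; [exists []; reflexivity|].
  destruct IH as [l' Hl'].
  destruct (l ++ R0) as [|b r'] eqn:E.
  - destruct l; simpl in E; [subst; congruence|discriminate].
  - simpl app. rewrite E.
    change (refine (a :: b :: r')) with (if Rlt_dec a b then a :: (a + b) / 2 :: refine (b :: r') else a :: refine (b :: r')).
    rewrite Hl'. destruct (Rlt_dec a b).
    + exists (a :: (a+b)/2 :: l'). reflexivity.
    + exists (a :: l'). reflexivity.
Qed.

Lemma refine_cc a b r : refine (a :: b :: r) = if Rlt_dec a b then a :: (a + b) / 2 :: refine (b :: r) else a :: refine (b :: r).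
Proof. reflexivity. Qed.

Lemma refine_rep1 n : refine (repeat 1 n) = repeat 1 n.
Proof.
  induction n; [reflexivity|].
  destruct n; [reflexivity|].
  change (repeat 1 (S (S n))) with (1 :: 1 :: repeat 1 n). rewrite refine_cc.
  destruct (Rlt_dec 1 1); [lra|]. change (repeat 1 (S n)) with (1 :: repeat 1 n) in IHn. rewrite IHn. reflexivity.
Qed.

Lemma refine_rep0 n M : refine (repeat 0 (S n) ++ M) = repeat 0 n ++ refine (0 :: M).
Proof.
  induction n; [reflexivity|].
  change (repeat 0 (S (S n)) ++ M) with (0 :: 0 :: (repeat 0 n ++ M)).
  rewrite refine_cc.
  destruct (Rlt_dec 0 0); [lra|]. change (repeat 0 (S n) ++ M) with (0 :: (repeat 0 n ++ M)) in IHn. rewrite IHn. reflexivity.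
Qed.

Definition Inv (p : nat) (t : list R) : Prop := exists l, t = repeat 0 (S p) ++ l ++ repeat 1 (S p).

Lemma rep_shift (x : R) n X : repeat x n ++ x :: X = repeat x (S n) ++ X.
Proof. induction n; simpl; [reflexivity|]. rewrite IHn. reflexivity. Qed.

Lemma refine_inv p t : Inv p t -> Inv p (refine t).
Proof.
  intros [l Hl]. subst t. rewrite refine_rep0.
  destruct (refine_app (0 :: l) (repeat 1 (S p))) as [l' Hl']; [discriminate|].
  rewrite refine_rep1 in Hl'. change ((0 :: l) ++ repeat 1 (S p)) with (0 :: (l ++ repeat 1 (S p))) in Hl'.
  destruct (refine_head 0 (l ++ repeat 1 (S p))) as [l3 H3].
  rewrite H3 in Hl'. rewrite H3. destruct l' as [|z l4].
  - change ([] ++ repeat 1 (S p)) with (1 :: repeat 1 p) in Hl'. inversion Hl'. lra.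
  - change ((z :: l4) ++ repeat 1 (S p)) with (z :: (l4 ++ repeat 1 (S p))) in Hl'.
    inversion Hl'; subst. exists l4.
    rewrite rep_shift. reflexivity.
Qed.

Lemma list_rep (u : list R) n x : length u = n -> (forall i, (i < n)%nat -> nth i u 0 = x) -> u = repeat x n.
Proof.
  revert n. induction u as [|a u IH]; intros n Hl Hi; destruct n; simpl in *; try lia; auto.
  f_equal.
  - apply (Hi 0%nat). lia.
  - apply IH; [lia|]. intros i Hi'. apply (Hi (S i)). lia.
Qed.

Lemma valid_inv p t : valid_knots p t -> Inv p t.
Proof.
  intros [Hlen [Hnd [Hr [He Hm]]]].
  set (n := length t) in *.
  assert (Hn : (2 * p + 2 <= n)%nat).
  { destruct (le_lt_dec (2 * p + 2) n) as [H|H]; [exact H|exfalso].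
    destruct (He p ltac:(lia)) as [A _]. destruct (He (n - 1 - p)%nat ltac:(lia)) as [_ B].
    replace (n - 1 - (n - 1 - p))%nat with p in B by lia. lra. }
  exists (firstn (n - 2 * p - 2) (skipn (S p) t)).
  rewrite <- (firstn_skipn (S p) t) at 1. f_equal.
  - apply list_rep.
    + rewrite length_firstn. lia.
    + intros i Hi. rewrite nth_firstn. destruct (Nat.ltb_spec i (S p)); [|lia].
      apply (He i). lia.
  - rewrite <- (firstn_skipn (n - 2 * p - 2) (skipn (S p) t)) at 1. f_equal.
    apply list_rep.
    + rewrite length_skipn, length_skipn. lia.
    + intros i Hi. rewrite nth_skipn, nth_skipn.
      destruct (He (S p - 1 - i)%nat ltac:(lia)) as [_ B]. unfold knot in B.
      fold n in B. replace (n - 1 - (S p - 1 - i))%nat with (S p + (n - 2 * p - 2 + i))%nat in B by lia.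
      exact B.
Qed.

Lemma inv_facts p t : Inv p t ->
  (2 * p + 2 <= length t)%nat /\ (forall i, (i <= p)%nat -> knot t i = 0) /\
  (forall i, (i <= p)%nat -> knot t (length t - 1 - i) = 1).
Proof.
  intros [l Hl]. subst t. rewrite !length_app, !repeat_length.
  split; [lia|split].
  - intros i Hi. unfold knot. rewrite app_nth1 by (rewrite repeat_length; lia).
    apply nth_repeat_lt. lia.
  - intros i Hi. unfold knot. rewrite app_assoc.
    rewrite app_nth2 by (rewrite length_app, repeat_length; lia).
    rewrite length_app, repeat_length. apply nth_repeat_lt. lia.
Qed.

Definition R01 (x : R) : Prop := 0 <= x <= 1.

Lemma level_props p t0 : valid_knots p t0 -> forall k,
  nondecreasing (Nat.iter k refine t0) /\ Forall R01 (Nat.iter k refine t0) /\ Inv p (Nat.iter k refine t0).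
Proof.
  intros Hv. induction k.
  - simpl. destruct Hv as [Hl [Hn [Hr Hrest]]] eqn:HvE. split; [exact Hn|split; [|apply valid_inv; exact (conj Hl (conj Hn (conj Hr Hrest)))]].
    apply Forall_forall. intros x Hx. destruct (In_nth t0 x 0 Hx) as [r [Hr1 Hr2]].
    subst x. apply (Hr r Hr1).
  - destruct IHk as [A [B C]]. simpl. split; [apply refine_nondec; exact A|split].
    + apply refine_forall; [|exact B]. unfold R01; intros; lra.
    + apply refine_inv; exact C.
Qed.

Lemma KV_of t : nondecreasing t -> Forall R01 t -> KV t.
Proof.
  intros Hn Hf. split; [apply nondec_mono; exact Hn|].
  intros a. unfold knot. destruct (lt_dec a (length t)) as [H|H].
  - rewrite Forall_forall in Hf. apply Hf. apply nth_In. exact H.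
  - rewrite nth_overflow by lia. lra.
Qed.

Lemma level_incl t0 : forall m k, (m <= k)%nat -> forall x, In x (Nat.iter m refine t0) -> In x (Nat.iter k refine t0).
Proof.
  intros m k H. induction H; intros x Hx; [exact Hx|]. simpl. apply refine_in. apply IHle. exact Hx.
Qed.

Lemma in_knot t x : In x t -> exists r, (r < length t)%nat /\ knot t r = x.
Proof. intros H. destruct (In_nth t x 0 H) as [r [A B]]. exists r. split; auto. Qed.

Section Lev.
Variable p : nat.
Variable t : list R.
Hypothesis Ht : KV t.
Hypothesis Hi : Inv p t.

Lemma exists_e e : e = 0 \/ e = 1 -> exists j, (j < nbs t p)%nat /\ bsp t p j e = 1.
Proof.
  destruct (inv_facts p t Hi) as [Hl [H0 H1]]. unfold nbs.
  intros [E|E]; subst e.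
  - destruct (transition (fun r => knot t r = 0)) with (a := p) (b := (length t - 1)%nat) as [r [Hr [P1 P2]]].
    { intros n. destruct (Req_dec (knot t n) 0); auto. }
    { lia. } { apply H0; lia. }
    { replace (length t - 1)%nat with (length t - 1 - 0)%nat by lia. rewrite H1 by lia. lra. }
    exists (r - p)%nat. split; [lia|].
    pose proof (krange t Ht (S r)).
    apply bsp_one; [exact Ht|lia| | |].
    + pose proof (kmono t Ht (r - p) r ltac:(lia) ltac:(lia)). pose proof (krange t Ht (r - p)). lra.
    + replace (r - p + p)%nat with r by lia. exact P1.
    + replace (r - p + p + 1)%nat with (S r) by lia. lra.
  - destruct (transition (fun r => knot t r < 1)) with (a := 0%nat) (b := (length t - 1 - p)%nat) as [r [Hr [P1 P2]]].
    { intros n. destruct (Rlt_dec (knot t n) 1); auto. }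
    { lia. } { rewrite H0 by lia. lra. }
    { rewrite H1 by lia. lra. }
    exists r. split; [lia|].
    pose proof (krange t Ht (S r)).
    apply (proj1 (bsp_at1 t Ht p r ltac:(lia))). lra.
Qed.

Lemma val_e e j : e = 0 \/ e = 1 -> (j < nbs t p)%nat -> bsp t p j e <> 0 -> bsp t p j e = 1.
Proof.
  unfold nbs. intros [E|E] Hj Hn; subst e.
  - exact (proj2 (proj2 (bsp_at0 t Ht p j ltac:(lia) Hn))).
  - destruct (bsp_at1 t Ht p j ltac:(lia)) as [A B].
    destruct (classic (knot t j < 1 /\ knot t (S j) = 1)) as [C|C]; [apply A; exact C|].
    exfalso; apply Hn; apply B; exact C.
Qed.

Lemma uniq_e e j1 j2 : e = 0 \/ e = 1 -> (j1 < nbs t p)%nat -> (j2 < nbs t p)%nat ->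
  bsp t p j1 e <> 0 -> bsp t p j2 e <> 0 -> j1 = j2.
Proof.
  unfold nbs. intros [E|E] H1 H2 N1 N2; subst e.
  - destruct (bsp_at0 t Ht p j1 ltac:(lia) N1) as [A1 [B1 _]].
    destruct (bsp_at0 t Ht p j2 ltac:(lia) N2) as [A2 [B2 _]].
    destruct (lt_eq_lt_dec j1 j2) as [[L|L]|L]; auto; exfalso.
    + pose proof (kmono t Ht (j1+p+1) (j2+p) ltac:(lia) ltac:(lia)). lra.
    + pose proof (kmono t Ht (j2+p+1) (j1+p) ltac:(lia) ltac:(lia)). lra.
  - assert (G : forall j, (j + p + 1 < length t)%nat -> bsp t p j 1 <> 0 -> knot t j < 1 /\ knot t (S j) = 1).
    { intros j Hj Nj. destruct (bsp_at1 t Ht p j Hj) as [_ B].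
      destruct (classic (knot t j < 1 /\ knot t (S j) = 1)) as [C|C]; auto.
      exfalso; apply Nj; apply B; exact C. }
    destruct (G j1 ltac:(lia) N1) as [A1 B1]. destruct (G j2 ltac:(lia) N2) as [A2 B2].
    destruct (lt_eq_lt_dec j1 j2) as [[L|L]|L]; auto; exfalso.
    + pose proof (kmono t Ht (S j1) j2 ltac:(lia) ltac:(lia)). lra.
    + pose proof (kmono t Ht (S j2) j1 ltac:(lia) ltac:(lia)). lra.
Qed.

Lemma cell_dir e j tm c y : e = 0 \/ e = 1 -> (j < nbs t p)%nat -> bsp t p j e <> 0 ->
  KV tm -> (forall a, (a < length tm)%nat -> exists r, (r < length t)%nat /\ knot t r = knot tm a) ->
  (1 <= c < length tm)%nat -> knot tm (c - 1) < knot tm c -> knot tm (c - 1) <= e <= knot tm c ->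
  knot t j <= y <= knot t (j + p + 1) -> knot tm (c - 1) <= y <= knot tm c.
Proof.
  unfold nbs. intros [E|E] Hj Hn Htm Hinc Hc Hlt He Hy; subst e.
  - destruct (bsp_at0 t Ht p j ltac:(lia) Hn) as [A [B _]].
    pose proof (krange t Ht j). pose proof (krange tm Htm (c-1)%nat).
    split; [lra|].
    destruct (Hinc c ltac:(lia)) as [r [Hr Er]].
    destruct (le_lt_dec r (j + p)) as [L|L].
    + pose proof (kmono t Ht r (j+p) L ltac:(lia)). pose proof (krange t Ht r). lra.
    + pose proof (kmono t Ht (j+p+1) r ltac:(lia) Hr). lra.
  - destruct (bsp_at1 t Ht p j ltac:(lia)) as [_ B].
    destruct (classic (knot t j < 1 /\ knot t (S j) = 1)) as [[C1 C2]|C]; [|exfalso; apply Hn; apply B; exact C].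
    pose proof (krange t Ht (j + p + 1)). pose proof (krange tm Htm c).
    split; [|lra].
    destruct (Hinc (c - 1)%nat ltac:(lia)) as [r [Hr Er]].
    destruct (le_lt_dec r j) as [L|L].
    + pose proof (kmono t Ht r j L ltac:(lia)). lra.
    + pose proof (kmono t Ht (S j) r ltac:(lia) Hr). lra.
Qed.

End Lev.

Lemma prodR_ext n f g : (forall i, (i < n)%nat -> f i = g i) -> prodR n f = prodR n g.
Proof.
  induction n; intros H; simpl; [reflexivity|].
  rewrite IHn by (intros; apply H; lia). rewrite H by lia. reflexivity.
Qed.

Lemma prodR_skip n f I : (I < n)%nat -> prodR n f = prodR (n - 1) (skip I f) * f I.
Proof.
  revert I. induction n; intros I HI; [lia|].
  simpl prodR at 1. destruct (Nat.eq_dec I n) as [E|E].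
  - subst I. replace (S n - 1)%nat with n by lia. f_equal.
    apply prodR_ext. intros i Hi. unfold skip. destruct (Nat.ltb_spec i n); [reflexivity|lia].
  - rewrite (IHn I) by lia. replace (S n - 1)%nat with (S (n - 1)) by lia. simpl prodR.
    assert (Hs : skip I f (n - 1) = f n) by (unfold skip; destruct (Nat.ltb_spec (n-1) I); [lia|]; f_equal; lia).
    rewrite Hs. ring.
Qed.

Lemma prodR_nz n f : prodR n f <> 0 -> forall i, (i < n)%nat -> f i <> 0.
Proof.
  induction n; intros H i Hi; [lia|]. simpl in H.
  destruct (Nat.eq_dec i n) as [E|E].
  - subst. intro Z. apply H. rewrite Z. ring.
  - apply IHn; [|lia]. intro Z. apply H. rewrite Z. ring.
Qed.

Definition upd (I : nat) (e : R) (x : pt) : pt := fun i => if (i =? I)%nat then e else x i.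

Lemma ins_skip I e x : ins I e (skip I x) = upd I e x.
Proof.
  apply functional_extensionality. intros i. unfold ins, skip, upd.
  destruct (Nat.ltb_spec i I); destruct (Nat.eqb_spec i I); try lia; try reflexivity.
  destruct (Nat.ltb_spec (i - 1) I); [lia|]. f_equal. lia.
Qed.

Lemma skip_ins I e s : skip I (ins I e s) = s.
Proof.
  apply functional_extensionality. intros i. unfold ins, skip.
  destruct (Nat.ltb_spec i I).
  - destruct (Nat.ltb_spec i I); [reflexivity|lia].
  - destruct (Nat.ltb_spec (S i) I); [lia|]. destruct (Nat.eqb_spec (S i) I); [lia|]. f_equal. lia.
Qed.

Lemma ins_at I e s : ins I e s I = e.
Proof. unfold ins. destruct (Nat.ltb_spec I I); [lia|]. rewrite Nat.eqb_refl. reflexivity. Qed.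

Lemma skip_upd I e x : skip I (upd I e x) = skip I x.
Proof.
  apply functional_extensionality. intros i. unfold skip, upd.
  destruct (Nat.ltb_spec i I); [destruct (Nat.eqb_spec i I); [lia|reflexivity]|].
  destruct (Nat.eqb_spec (S i) I); [lia|reflexivity].
Qed.

Lemma bspline_dec d p K0 k j I z : (I < d)%nat ->
  bspline d p K0 k j z = bspline (d - 1) (skip I p) (skip I K0) k (skip I j) (skip I z)
                          * bsp (knots K0 k I) (p I) (j I) (z I).
Proof.
  intros HI. unfold bspline. rewrite (prodR_skip d _ I HI). f_equal.
  apply prodR_ext. intros i Hi. unfold skip, knots. destruct (i <? I)%nat; reflexivity.
Qed.

Section Multi.
Variable d : nat.
Variable p : nat -> nat.
Variable K0 : nat -> list R.
Hypothesis HK : forall i, (i < d)%nat -> valid_knots (p i) (K0 i).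

Lemma KVk k i : (i < d)%nat -> KV (knots K0 k i).
Proof.
  intros Hi. destruct (level_props (p i) (K0 i) (HK i Hi) k) as [A [B _]]. apply KV_of; auto.
Qed.
Lemma Invk k i : (i < d)%nat -> Inv (p i) (knots K0 k i).
Proof. intros Hi. exact (proj2 (proj2 (level_props (p i) (K0 i) (HK i Hi) k))). Qed.

Lemma inclk m k i : (i < d)%nat -> (m <= k)%nat -> forall a, (a < length (knots K0 m i))%nat ->
  exists r, (r < length (knots K0 k i))%nat /\ knot (knots K0 k i) r = knot (knots K0 m i) a.
Proof.
  intros Hi Hmk a Ha. apply in_knot. apply (level_incl (K0 i) m k Hmk). apply nth_In. exact Ha.
Qed.

Lemma bsp_nz_range k i j y : (i < d)%nat -> (j < nbs (knots K0 k i) (p i))%nat ->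
  bsp (knots K0 k i) (p i) j y <> 0 ->
  knot (knots K0 k i) j <= y <= knot (knots K0 k i) (j + p i + 1) /\ 0 <= y <= 1.
Proof.
  intros Hi Hj Hn. unfold nbs in Hj.
  destruct (bsp_supp _ (KVk k i Hi) (p i) j y ltac:(lia) Hn) as [A _].
  pose proof (krange _ (KVk k i Hi) j). pose proof (krange _ (KVk k i Hi) (j + p i + 1)).
  split; [exact A|lra].
Qed.

Lemma bspline_nz_cube k j y : valid_index d p K0 k j -> bspline d p K0 k j y <> 0 -> cube d y.
Proof.
  intros Hv Hn i Hi. pose proof (prodR_nz _ _ Hn i Hi) as H. simpl in H.
  exact (proj2 (bsp_nz_range k i (j i) (y i) Hi (Hv i Hi) H)).
Qed.

Lemma closure_range k j x : valid_index d p K0 k j ->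
  closure d (fun y => bspline d p K0 k j y <> 0) x ->
  forall i, (i < d)%nat -> knot (knots K0 k i) (j i) <= x i <= knot (knots K0 k i) (j i + p i + 1).
Proof.
  intros Hv Hc i Hi.
  set (lo := knot (knots K0 k i) (j i)). set (hi := knot (knots K0 k i) (j i + p i + 1)).
  assert (G : forall y, bspline d p K0 k j y <> 0 -> lo <= y i <= hi).
  { intros y Hy. pose proof (prodR_nz _ _ Hy i Hi) as H. simpl in H.
    exact (proj1 (bsp_nz_range k i (j i) (y i) Hi (Hv i Hi) H)). }
  split.
  - destruct (Rle_dec lo (x i)) as [L|L]; [exact L|exfalso].
    destruct (Hc (lo - x i) ltac:(lra)) as [y [Hy Hd]]. specialize (Hd i Hi). specialize (G y Hy).
    apply Rabs_def2 in Hd. lra.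
  - destruct (Rle_dec (x i) hi) as [L|L]; [exact L|exfalso].
    destruct (Hc (x i - hi) ltac:(lra)) as [y [Hy Hd]]. specialize (Hd i Hi). specialize (G y Hy).
    apply Rabs_def2 in Hd. lra.
Qed.

Lemma closure_cube k j x : valid_index d p K0 k j ->
  closure d (fun y => bspline d p K0 k j y <> 0) x -> cube d x.
Proof.
  intros Hv Hc i Hi. pose proof (closure_range k j x Hv Hc i Hi).
  pose proof (krange _ (KVk k i Hi) (j i)). pose proof (krange _ (KVk k i Hi) (j i + p i + 1)). lra.
Qed.

End Multi.

Definition insn (I a : nat) (j : nat -> nat) : nat -> nat :=
  fun i => if (i <? I)%nat then j i else if (i =? I)%nat then a else j (i - 1)%nat.

Lemma skip_insn I a j : skip I (insn I a j) = j.
Proof.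
  apply functional_extensionality. intros i. unfold insn, skip.
  destruct (Nat.ltb_spec i I).
  - destruct (Nat.ltb_spec i I); [reflexivity|lia].
  - destruct (Nat.ltb_spec (S i) I); [lia|]. destruct (Nat.eqb_spec (S i) I); [lia|]. f_equal. lia.
Qed.

Lemma insn_at I a j : insn I a j I = a.
Proof. unfold insn. destruct (Nat.ltb_spec I I); [lia|]. rewrite Nat.eqb_refl. reflexivity. Qed.

Section Main.
Variable d : nat.
Hypothesis Hd : (2 <= d)%nat.
Variable p : nat -> nat.
Variable K0 : nat -> list R.
Hypothesis HK : forall i, (i < d)%nat -> valid_knots (p i) (K0 i).
Variable Om : nat -> pt -> Prop.
Hypothesis Hmesh : hier_mesh d K0 Om.
Variable I : nat.
Hypothesis HI : (I < d)%nat.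
Variable e : R.
Hypothesis He : e = 0 \/ e = 1.

Lemma HKs : forall i, (i < d - 1)%nat -> valid_knots (skip I p i) (skip I K0 i).
Proof. intros i Hi. unfold skip. destruct (i <? I)%nat; apply HK; lia. Qed.

Definition Bd k j := bspline d p K0 k j.
Definition Br k j := bspline (d - 1) (skip I p) (skip I K0) k (skip I j).
Definition bI k j y := bsp (knots K0 k I) (p I) (j I) y.

Lemma KD k j z : Bd k j z = Br k j (skip I z) * bI k j (z I).
Proof. apply bspline_dec; exact HI. Qed.

Lemma KR k j s : Bd k j (ins I e s) = Br k j s * bI k j e.
Proof. rewrite KD, skip_ins, ins_at. reflexivity. Qed.

Lemma valid_skip k j : valid_index d p K0 k j -> valid_index (d - 1) (skip I p) (skip I K0) k (skip I j).
Proof. intros Hv i Hi. unfold skip, knots. destruct (i <? I)%nat; apply Hv; lia. Qed.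

Lemma valid_insn k a j : valid_index (d - 1) (skip I p) (skip I K0) k j ->
  (a < nbs (knots K0 k I) (p I))%nat -> valid_index d p K0 k (insn I a j).
Proof.
  intros Hv Ha i Hi. unfold insn.
  destruct (Nat.ltb_spec i I).
  - specialize (Hv i ltac:(lia)). unfold skip, knots in Hv. destruct (Nat.ltb_spec i I); [exact Hv|lia].
  - destruct (Nat.eqb_spec i I); [subst; exact Ha|].
    specialize (Hv (i - 1)%nat ltac:(lia)). unfold skip, knots in Hv.
    destruct (Nat.ltb_spec (i - 1) I); [lia|]. replace (S (i - 1)) with i in Hv by lia. exact Hv.
Qed.

Lemma cube_ins s : cube (d - 1) s -> cube d (ins I e s).
Proof.
  intros Hs i Hi. unfold ins. destruct (Nat.ltb_spec i I); [apply Hs; lia|].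
  destruct (Nat.eqb_spec i I); [destruct He; lra|]. apply Hs; lia.
Qed.

Lemma CL3 k j x : closure d (fun y => Bd k j y <> 0) x ->
  closure (d - 1) (fun y => Br k j y <> 0) (skip I x).
Proof.
  intros Hc eps Heps. destruct (Hc eps Heps) as [y [Hy Hdist]].
  exists (skip I y). split.
  - intro Z. apply Hy. rewrite KD, Z. ring.
  - intros i Hi. unfold skip. destruct (i <? I)%nat; apply Hdist; lia.
Qed.

Lemma CL4 k j s : closure (d - 1) (fun y => Br k j y <> 0) s -> bI k j e <> 0 ->
  closure d (fun y => Bd k j y <> 0) (ins I e s).
Proof.
  intros Hc Hb eps Heps. destruct (Hc eps Heps) as [y [Hy Hdist]].
  exists (ins I e y). split.
  - rewrite KR. intro Z. apply Rmult_integral in Z. destruct Z; contradiction.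
  - intros i Hi. unfold ins. destruct (Nat.ltb_spec i I); [apply Hdist; lia|].
    destruct (Nat.eqb_spec i I); [replace (e - e) with 0 by ring; rewrite Rabs_R0; exact Heps|].
    apply Hdist; lia.
Qed.

Lemma Om_chain : forall m k, (m <= k)%nat -> forall x, Om k x -> Om m x.
Proof.
  destruct Hmesh as [_ [H2 _]]. intros m k H. induction H; intros x Hx; [exact Hx|].
  apply IHle. apply H2. exact Hx.
Qed.

Lemma Mcell m z x : Om (S m) z ->
  (forall c, is_cell d K0 m c -> in_cell d K0 m c z -> in_cell d K0 m c x) -> Om (S m) x.
Proof.
  destruct Hmesh as [_ [_ [H3 _]]]. intros Hz Hcx.
  destruct (H3 m) as [C HC]. apply HC in Hz. destruct Hz as [c [Cc [Ic Inc]]].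
  apply HC. exists c. split; [exact Cc|split; [exact Ic|]]. apply Hcx; auto.
Qed.

Lemma transfer k j x m : valid_index d p K0 k j -> bI k j e <> 0 ->
  closure d (fun y => Bd k j y <> 0) x -> (m <= k)%nat ->
  Om (S m) (upd I e x) -> Om (S m) x.
Proof.
  intros Hv Hb Hc Hm Hz. apply (Mcell m (upd I e x) x Hz).
  intros c Hcell Hin i Hi.
  specialize (Hin i Hi). unfold upd in Hin.
  destruct (Nat.eqb_spec i I) as [E|E]; [|exact Hin].
  subst i. destruct (Hcell I Hi) as [Hc1 Hc2].
  apply (cell_dir (p I) (knots K0 k I) (KVk d p K0 HK k I HI) e (j I) (knots K0 m I) (c I) (x I) He (Hv I HI) Hb
           (KVk d p K0 HK m I HI) (inclk d K0 m k I HI Hm) Hc1 Hc2 Hin).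
  exact (closure_range d p K0 HK k j x Hv Hc I HI).
Qed.

Lemma claim2 b : inH d p K0 Om b -> nonzero_on (d - 1) (restr I e b) ->
  inH (d - 1) (skip I p) (skip I K0) (restrOm I e Om) (restr I e b).
Proof.
  intros [k [j [Hv [Hs [Hns Heq]]]]] [s0 [Hs0 Hb0]].
  unfold restr in Hb0.
  assert (HB0 : Bd k j (ins I e s0) <> 0) by (unfold Bd; rewrite <- Heq by (apply cube_ins; exact Hs0); exact Hb0).
  rewrite KR in HB0.
  assert (HbI : bI k j e <> 0) by (intro Z; apply HB0; rewrite Z; ring).
  assert (HbI1 : bI k j e = 1).
  { apply (val_e (p I) (knots K0 k I) (KVk d p K0 HK k I HI) e (j I) He (Hv I HI) HbI). }
  exists k, (skip I j). split; [apply valid_skip; exact Hv|split; [|split]].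
  - intros s Hc. unfold restrOm. apply Hs. apply CL4; [exact Hc|exact HbI].
  - intro H. apply Hns. intros x Hx.
    pose proof (H (skip I x) (CL3 k j x Hx)) as Hz. unfold restrOm in Hz. rewrite ins_skip in Hz.
    exact (transfer k j x k Hv HbI Hx (le_n k) Hz).
  - intros s Hc. unfold restr. rewrite Heq by (apply cube_ins; exact Hc).
    fold (Bd k j). rewrite KR, HbI1. unfold Br. ring.
Qed.


Lemma claim1 b' : inH (d - 1) (skip I p) (skip I K0) (restrOm I e Om) b' ->
  exists b, inH d p K0 Om b /\ nonzero_on (d - 1) (restr I e b) /\ eq_on (d - 1) (restr I e b) b'.
Proof.
  intros [k [j' [Hv' [Hs' [Hns' Heq']]]]].
  destruct (exists_e (p I) (knots K0 k I) (KVk d p K0 HK k I HI) (Invk d p K0 HK k I HI) e He) as [a [Ha Hba]].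
  set (j := insn I a j').
  assert (Hsk : skip I j = j') by apply skip_insn.
  assert (HjI : j I = a) by apply insn_at.
  assert (Hv : valid_index d p K0 k j) by (apply valid_insn; assumption).
  assert (HbI : bI k j e = 1) by (unfold bI; rewrite HjI; exact Hba).
  assert (HR : forall s, Bd k j (ins I e s) = bspline (d - 1) (skip I p) (skip I K0) k j' s).
  { intros s. rewrite KR, HbI. unfold Br. rewrite Hsk. ring. }
  exists (Bd k j). split; [|split].
  - exists k, j. split; [exact Hv|split; [|split]].
    + intros x Hx. pose proof (CL3 k j x Hx) as H3. unfold Br in H3. rewrite Hsk in H3.
      pose proof (Hs' _ H3) as Hz. unfold restrOm in Hz. rewrite ins_skip in Hz.
      destruct k as [|m].
      * destruct Hmesh as [H1 _]. apply H1. exact (closure_cube d p K0 HK 0 j x Hv Hx).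
      * apply (transfer (S m) j x m Hv ltac:(rewrite HbI; lra) Hx (Nat.le_succ_diag_r m)).
        exact Hz.
    + intro H. apply Hns'. intros s Hc. unfold restrOm. apply H.
      apply CL4; [unfold Br; rewrite Hsk; exact Hc|rewrite HbI; lra].
    + intros x _. reflexivity.
  - apply NNPP. intro Hn. apply Hns'. intros s Hc. exfalso.
    destruct (Hc 1 ltac:(lra)) as [y [Hy _]]. apply Hn. exists y. split.
    + exact (bspline_nz_cube (d - 1) (skip I p) (skip I K0) HKs k j' y Hv' Hy).
    + unfold restr. rewrite HR. exact Hy.
  - intros s Hc. unfold restr. rewrite HR. symmetry. apply Heq'. exact Hc.
Qed.

Lemma cross k1 j1 k2 j2 : (k1 < k2)%nat -> valid_index d p K0 k1 j1 -> valid_index d p K0 k2 j2 ->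
  bI k1 j1 e <> 0 -> bI k2 j2 e <> 0 ->
  ~ supp_sub d (bspline d p K0 k1 j1) (Om (S k1)) -> supp_sub d (bspline d p K0 k2 j2) (Om k2) ->
  (forall s, cube (d - 1) s -> Br k1 j1 s = Br k2 j2 s) -> False.
Proof.
  intros Hk Hv1 Hv2 Hb1 Hb2 Hns1 Hs2 HE.
  apply Hns1. intros x Hx. pose proof (CL3 k1 j1 x Hx) as H3.
  assert (H3' : closure (d - 1) (fun y => Br k2 j2 y <> 0) (skip I x)).
  { intros eps Heps. destruct (H3 eps Heps) as [y [Hy Hdist]]. exists y. split; [|exact Hdist].
    rewrite <- HE; [exact Hy|]. apply (bspline_nz_cube (d - 1) (skip I p) (skip I K0) HKs k1 (skip I j1) y).
    - apply valid_skip; exact Hv1.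
    - exact Hy. }
  pose proof (CL4 k2 j2 (skip I x) H3' Hb2) as H4. rewrite ins_skip in H4.
  pose proof (Hs2 _ H4) as Hz.
  apply (transfer k1 j1 x k1 Hv1 Hb1 Hx (le_n k1)).
  apply (Om_chain (S k1) k2 Hk). exact Hz.
Qed.

Lemma claim3 b1 b2 : inH d p K0 Om b1 -> inH d p K0 Om b2 -> ~ eq_on d b1 b2 ->
  nonzero_on (d - 1) (restr I e b1) -> ~ eq_on (d - 1) (restr I e b1) (restr I e b2).
Proof.
  intros [k1 [j1 [Hv1 [Hs1 [Hns1 Heq1]]]]] [k2 [j2 [Hv2 [Hs2 [Hns2 Heq2]]]]] Hne [s0 [Hs0 Hb0]] Hr.
  unfold restr in Hb0.
  assert (HB1 : Bd k1 j1 (ins I e s0) <> 0) by (unfold Bd; rewrite <- Heq1 by (apply cube_ins; exact Hs0); exact Hb0).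
  assert (HB2 : Bd k2 j2 (ins I e s0) <> 0).
  { unfold Bd; rewrite <- Heq2 by (apply cube_ins; exact Hs0). specialize (Hr s0 Hs0). unfold restr in Hr.
    rewrite <- Hr. exact Hb0. }
  rewrite KR in HB1, HB2.
  assert (Hb1 : bI k1 j1 e <> 0) by (intro Z; apply HB1; rewrite Z; ring).
  assert (Hb2 : bI k2 j2 e <> 0) by (intro Z; apply HB2; rewrite Z; ring).
  assert (Hb1' : bI k1 j1 e = 1) by exact (val_e (p I) (knots K0 k1 I) (KVk d p K0 HK k1 I HI) e (j1 I) He (Hv1 I HI) Hb1).
  assert (Hb2' : bI k2 j2 e = 1) by exact (val_e (p I) (knots K0 k2 I) (KVk d p K0 HK k2 I HI) e (j2 I) He (Hv2 I HI) Hb2).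
  assert (HE : forall s, cube (d - 1) s -> Br k1 j1 s = Br k2 j2 s).
  { intros s Hs. specialize (Hr s Hs). unfold restr in Hr.
    rewrite Heq1, Heq2 in Hr by (apply cube_ins; exact Hs). fold (Bd k1 j1) (Bd k2 j2) in Hr.
    rewrite !KR, Hb1', Hb2' in Hr. lra. }
  destruct (lt_eq_lt_dec k1 k2) as [[L|L]|L].
  - exact (cross k1 j1 k2 j2 L Hv1 Hv2 Hb1 Hb2 Hns1 Hs2 HE).
  - subst k2. rename k1 into k.
    assert (EI : j1 I = j2 I).
    { apply (uniq_e (p I) (knots K0 k I) (KVk d p K0 HK k I HI) e (j1 I) (j2 I) He (Hv1 I HI) (Hv2 I HI) Hb1 Hb2). }
    destruct (classic (exists i', (i' < d - 1)%nat /\ skip I j1 i' <> skip I j2 i')) as [[i' [Hi' Hne']]|Hall].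
    + set (D := (d - 1)%nat) in *.
      set (p' := skip I p). set (K' := skip I K0).
      assert (HKD : forall i, (i < D)%nat -> valid_knots (p' i) (K' i)) by exact HKs.
      pose proof (bspline_dec D p' K' k (skip I j1) i') as Dec1.
      pose proof (bspline_dec D p' K' k (skip I j2) i') as Dec2.
      set (t := knots K' k i').
      set (A1 := bspline (D - 1) (skip i' p') (skip i' K') k (skip i' (skip I j1)) (skip i' s0)).
      set (A2 := bspline (D - 1) (skip i' p') (skip i' K') k (skip i' (skip I j2)) (skip i' s0)).
      assert (E1 : Br k j1 s0 = A1 * bsp t (p' i') (skip I j1 i') (s0 i')) by (apply Dec1; exact Hi').
      assert (E2 : Br k j2 s0 = A2 * bsp t (p' i') (skip I j2 i') (s0 i')) by (apply Dec2; exact Hi').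
      assert (N1 : Br k j1 s0 <> 0) by (intro Z; apply HB1; rewrite Z; ring).
      assert (N2 : Br k j2 s0 <> 0) by (rewrite <- HE by exact Hs0; exact N1).
      assert (HA1 : A1 <> 0) by (intro Z; apply N1; rewrite E1, Z; ring).
      assert (HA2 : A2 <> 0) by (intro Z; apply N2; rewrite E2, Z; ring).
      assert (Hy1 : bsp t (p' i') (skip I j1 i') (s0 i') <> 0) by (intro Z; apply N1; rewrite E1, Z; ring).
      pose proof (valid_skip k j1 Hv1 i' Hi') as V1. pose proof (valid_skip k j2 Hv2 i' Hi') as V2.
      fold p' K' t in V1, V2. unfold nbs in V1, V2.
      apply (uni_neq t (KVk D p' K' HKD k i' Hi') (p' i') (skip I j1 i') (skip I j2 i') A1 A2 (s0 i') Hne'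
               ltac:(lia) ltac:(lia) HA1 HA2).
      * intros y Hy. set (s := upd i' y s0).
        assert (Hs : cube (d - 1) s).
        { intros i Hi. unfold s, upd. destruct (i =? i')%nat; [exact Hy|apply Hs0; exact Hi]. }
        pose proof (HE s Hs) as Es. unfold Br in Es. fold D p' K' in Es.
        rewrite (Dec1 s Hi'), (Dec2 s Hi') in Es. unfold s in Es. rewrite !skip_upd in Es.
        unfold upd in Es. rewrite Nat.eqb_refl in Es. fold A1 A2 t in Es.
        rewrite Rmult_comm, Es. ring.
      * exact (Hs0 i' Hi').
      * exact Hy1.
    + apply Hne. intros x Hx. rewrite Heq1, Heq2 by exact Hx.
      unfold bspline. apply prodR_ext. intros i Hi.
      assert (Ej : j1 i = j2 i).
      { destruct (Nat.eq_dec i I) as [E|E]; [subst; exact EI|].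
        destruct (Nat.ltb_spec i I).
        - apply NNPP. intro C. apply Hall. exists i. split; [lia|]. unfold skip.
          destruct (Nat.ltb_spec i I); [exact C|lia].
        - apply NNPP. intro C. apply Hall. exists (i - 1)%nat. split; [lia|]. unfold skip.
          destruct (Nat.ltb_spec (i - 1) I); [lia|]. replace (S (i - 1)) with i by lia. exact C. }
      rewrite Ej. reflexivity.
  - apply (cross k2 j2 k1 j1 L Hv2 Hv1 Hb2 Hb1 Hns2 Hs1). intros s Hs. symmetry. apply HE. exact Hs.
Qed.

End Main.


Theorem proposition3p1
  (d : nat) (Hd : (2 <= d)%nat)
  (p : nat -> nat) (Hp : forall i, (i < d)%nat -> (1 <= p i)%nat)
  (K0 : nat -> list R) (HK : forall i, (i < d)%nat -> valid_knots (p i) (K0 i))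
  (Om : nat -> pt -> Prop) (Hmesh : hier_mesh d K0 Om)
  (I : nat) (HI : (I < d)%nat) (e : R) (He : e = 0 \/ e = 1) :
  (* H|_E ⊆ { beta|_E : beta ∈ H, beta|_E <> 0 } *)
  (forall b', inH (d - 1) (skip I p) (skip I K0) (restrOm I e Om) b' ->
     exists b, inH d p K0 Om b /\ nonzero_on (d - 1) (restr I e b) /\
               eq_on (d - 1) (restr I e b) b') /\
  (* { beta|_E : beta ∈ H, beta|_E <> 0 } ⊆ H|_E *)
  (forall b, inH d p K0 Om b -> nonzero_on (d - 1) (restr I e b) ->
     inH (d - 1) (skip I p) (skip I K0) (restrOm I e Om) (restr I e b)) /\
  (* injectivity of restriction on H *)
  (forall b1 b2, inH d p K0 Om b1 -> inH d p K0 Om b2 -> ~ eq_on d b1 b2 ->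
     nonzero_on (d - 1) (restr I e b1) ->
     ~ eq_on (d - 1) (restr I e b1) (restr I e b2)).
Proof.
  split; [|split].
  - intros b' Hb'. eapply claim1; eauto.
  - intros b Hb Hn. eapply claim2; eauto.
  - intros b1 b2 H1 H2 Hne Hn. eapply claim3; eauto.
Qed.
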